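(* Let $m,d,h$ be natural numbers with $d\geqslant h\geqslant m+2$, and let $c,C$ be positive constants. Let $\Xi:\mathbb{R}^h\to\mathbb{R}^d$ be a linear map and $L:\mathbb{R}^h\to\mathbb{R}^m$ a surjective linear map, with $\Vert\Xi\Vert_\infty\leqslant C$ and $\operatorname{dist}((\Xi,L),V^*_{\mathrm{degen},2}(m,d,h))\geqslant c$. Let $K=\ker L$, choose any orthonormal basis $\{\mathbf v^{(1)},\dots,\mathbf v^{(h-m)}\}$ of $K$, and let $\Phi:\mathbb{R}^{h-m}\to K$ be $\Phi(\mathbf x)=\sum_{i=1}^{h-m}x_i\mathbf v^{(i)}$. Then $\Vert\Xi\Phi\Vert_\infty=O(C)$ and $\operatorname{dist}(\Xi\Phi,V_{\mathrm{degen}}(h-m,d))=\Omega(c)$.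
   Context: Matrices identified with linear maps; $\Vert\cdot\Vert_\infty$ max absolute entry; $\operatorname{dist}$ is $\ell^\infty$ distance on entries. $V^*_{\mathrm{degen},2}(m,d,h)$: pairs $(\Xi,L)$ with $\Xi:\mathbb{R}^h\to\mathbb{R}^d$, $L:\mathbb{R}^h\to\mathbb{R}^m$ linear, such that for some $i,j\leqslant d$ and $\lambda\in\mathbb{R}$, $\mathbf e_i^*-\lambda\mathbf e_j^*\neq0$ and $\Xi^*(\mathbf e_i^*-\lambda\mathbf e_j^* )\in L^*((\mathbb{R}^m)^* )$ ($\mathbf e_i^*$ the standard dual basis of $(\mathbb{R}^d)^*$, $\Xi^*\varphi=\varphi\circ\Xi$). $\operatorname{dist}((\Xi,L),V^*_{\mathrm{degen},2}(m,d,h))\geqslant c$ means $(\Xi+Q,L)\notin V^*_{\mathrm{degen},2}(m,d,h)$ for all linear $Q:\mathbb{R}^h\to\mathbb{R}^d$ with $\Vert Q\Vert_\infty<c$. $V_{\mathrm{degen}}(n,d)$ is the set of linear maps $\Psi=(\psi_1,\dots,\psi_d):\mathbb{R}^n\to\mathbb{R}^d$ (systems of linear forms) such that for some $i$, every partition $\mathcal P_i$ of $[d]\setminus\{i\}$ has a part $\mathcal C$ with $\psi_i\in\mathrm{span}(\psi_j:j\in\mathcal C)$; equivalently, for some $i\neq j$, $\psi_i$ is a real multiple of $\psi_j$. Implied constants depend only on $m,d,h$. *)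

(* Defs.v *)
(* Matrices act on column vectors: a linear map R^n -> R^k
   is a matrix 'M[R]_(k, n), applied as A *m x. *)
From HB Require Import structures.
From mathcomp Require Import all_boot all_order all_algebra.
From mathcomp Require Import reals.
Set Implicit Arguments. Unset Strict Implicit. Unset Printing Implicit Defensive.
Import Order.TTheory GRing.Theory Num.Theory.
Local Open Scope ring_scope.

Definition mx_norm_inf (R : realType) (k n : nat) (A : 'M[R]_(k, n)) : R :=
  \big[Num.max/0]_(i < k) \big[Num.max/0]_(j < n) `|A i j|.

Definition dual_e (R : realType) (d : nat) (i : 'I_d) : 'rV[R]_d :=
  \row_(k < d) (if k == i then 1 else 0).

(* (Xi, L) in V*_degen,2(m,d,h): some nonzero phi = e_i' - lambda e_j' (dual basis)
   whose pullback phi o Xi lies in the image of the dual map of L,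
   i.e. equals u o L for some functional u on R^m. *)
Definition Vstar_degen2 (R : realType) (m d h : nat)
    (Xi : 'M[R]_(d, h)) (L : 'M[R]_(m, h)) : Prop :=
  exists (i j : 'I_d) (lam : R),
    dual_e R i - lam *: dual_e R j != 0 /\
    exists u : 'rV[R]_m, (dual_e R i - lam *: dual_e R j) *m Xi = u *m L.

Definition dist_ge_Vstar_degen2 (R : realType) (m d h : nat)
    (Xi : 'M[R]_(d, h)) (L : 'M[R]_(m, h)) (c : R) : Prop :=
  forall Q : 'M[R]_(d, h), mx_norm_inf Q < c -> ~ Vstar_degen2 (Xi + Q) L.

Definition in_span_rows (R : realType) (n d : nat) (Psi : 'M[R]_(d, n))
    (i : 'I_d) (C : {set 'I_d}) : Prop :=
  exists a : 'I_d -> R, row i Psi = \sum_(j in C) a j *: row j Psi.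

Definition V_degen (R : realType) (n d : nat) (Psi : 'M[R]_(d, n)) : Prop :=
  exists i : 'I_d, forall P : {set {set 'I_d}},
    partition P [set~ i] -> exists2 C, C \in P & in_span_rows Psi i C.

Definition dist_ge_V_degen (R : realType) (n d : nat) (Psi : 'M[R]_(d, n)) (c : R)
  : Prop :=
  forall Q : 'M[R]_(d, n), mx_norm_inf Q < c -> ~ V_degen (Psi + Q).

Definition mx_surjective (R : realType) (m h : nat) (L : 'M[R]_(m, h)) : Prop :=
  forall y : 'cV[R]_m, exists x : 'cV[R]_h, L *m x = y.

(* The columns v^(1..k) of V form an orthonormal basis of ker L;
   V is then the matrix of Phi(x) = sum_i x_i v^(i). *)
Definition orthonormal_basis_ker (R : realType) (m h k : nat)
    (L : 'M[R]_(m, h)) (V : 'M[R]_(h, k)) : Prop :=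
  [/\ V^T *m V = 1%:M,
      L *m V = 0 &
      forall x : 'cV[R]_h, L *m x = 0 -> exists y : 'cV[R]_k, x = V *m y].

(* Main.v *)
Require Import Defs.
From HB Require Import structures.
From mathcomp Require Import all_boot all_order all_algebra.
From mathcomp Require Import reals.
Import Order.TTheory GRing.Theory Num.Theory.
Local Open Scope ring_scope.

Lemma norm_ub (R : realType) k n (A : 'M[R]_(k, n)) b :
  0 <= b -> (forall i j, `|A i j| <= b) -> mx_norm_inf A <= b.
Proof.
move=> b0 H; rewrite /mx_norm_inf.
elim/big_ind: _ => //; first by move=> x y hx hy; rewrite ge_max hx hy.
move=> i _.
elim/big_ind: _ => //; first by move=> x y hx hy; rewrite ge_max hx hy.
Qed.

Lemma norm_lb (R : realType) k n (A : 'M[R]_(k, n)) i j :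
  `|A i j| <= mx_norm_inf A.
Proof.
rewrite /mx_norm_inf (bigD1 i) //= le_max; apply/orP; left.
by rewrite (bigD1 j) //= le_max lexx.
Qed.

Lemma norm_ge0 (R : realType) k n (A : 'M[R]_(k, n)) : 0 <= mx_norm_inf A.
Proof.
rewrite /mx_norm_inf; elim/big_ind: _ => //; first by move=> x y hx _; rewrite le_max hx.
move=> i _; elim/big_ind: _ => //; first by move=> x y hx _; rewrite le_max hx.
Qed.

Lemma orth_entry (R : realType) h k (V : 'M[R]_(h, k)) :
  V^T *m V = 1%:M -> forall a b, `|V a b| <= 1.
Proof.
move=> HV a b.
have : (V^T *m V) b b = 1 by rewrite HV mxE eqxx.
rewrite mxE (bigD1 a) //= !mxE => E.
have S : 0 <= \sum_(i < h | i != a) V^T b i * V i b.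
  by apply: sumr_ge0 => i _; rewrite mxE -expr2 sqr_ge0.
rewrite -(@ler_pXn2r _ 2) ?nnegrE ?normr_ge0 // expr1n real_normK ?num_real //.
by rewrite expr2 -E lerDl.
Qed.

Lemma vdeg_pair (R : realType) n d (M : 'M[R]_(d, n)) :
  V_degen M -> exists i x (a : R), x != i /\ row i M = a *: row x M.
Proof.
case=> i HP.
have [C CP [a Ha]] := HP _ (preim_partitionP id [set~ i]).
case/imsetP: CP => x xD EC; subst C.
exists i, x, (a x); split; first by move: xD; rewrite !inE.
rewrite Ha (big_pred1 x) // => y; rewrite !inE /=.
case: (y =P x) => [->|/eqP ne]; first by rewrite eqxx andbT -(in_setC1 x i). 
by rewrite (eq_sym x y) (negbTE ne) andbF.
Qed.

Lemma dual_eE (R : realType) d (i : 'I_d) : dual_e R i = delta_mx 0 i.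
Proof. by apply/rowP => k; rewrite /dual_e !mxE /=; case: (k == i). Qed.

Lemma colM (R : realType) a b c (X : 'M[R]_(a, b)) (Y : 'M[R]_(b, c)) s :
  col s (X *m Y) = X *m col s Y.
Proof. by rewrite !colE mulmxA. Qed.

Lemma in_rowspace (R : realType) m h k (L : 'M[R]_(m, h)) (Phi : 'M[R]_(h, k))
  (w : 'rV[R]_h) :
  (forall x : 'cV[R]_h, L *m x = 0 -> exists y : 'cV[R]_k, x = Phi *m y) ->
  w *m Phi = 0 -> exists u : 'rV[R]_m, w = u *m L.
Proof.
move=> Hk Hw.
have : (w <= L)%MS.
  rewrite submxE; apply/eqP/matrixP => r s.
  have Ly : L *m col s (cokermx L) = 0.
    by rewrite colE mulmxA mulmx_coker mul0mx.
  have [y Hy] := Hk _ Ly.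
  have -> : (w *m cokermx L) r s = (w *m col s (cokermx L)) r 0.
    by rewrite -colM [RHS]mxE.
  by rewrite Hy mulmxA Hw mul0mx !mxE.
by case/submxP => u ->; exists u.
Qed.

Theorem lemma7p2 (R : realType) (m d h : nat) :
  (m + 2 <= h)%N -> (h <= d)%N ->
  exists (A B : R), 0 < A /\ 0 < B /\
  forall (c C : R), 0 < c -> 0 < C ->
  forall (Xi : 'M[R]_(d, h)) (L : 'M[R]_(m, h)),
    mx_surjective L ->
    mx_norm_inf Xi <= C ->
    dist_ge_Vstar_degen2 Xi L c ->
    forall Phi : 'M[R]_(h, h - m),
      orthonormal_basis_ker L Phi ->
      mx_norm_inf (Xi *m Phi) <= A * C /\
      dist_ge_V_degen (Xi *m Phi) (B * c).
Proof.
move=> hm hd.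
have hpos : (0 < h - m)%N by rewrite subn_gt0; apply: leq_trans hm; rewrite -addn1 leq_add2l.
have hpos' : (0 < h)%N by apply: leq_trans hpos _; rewrite leq_subr.
have nR : 0 < ((h - m)%:R : R) by rewrite ltr0n.
exists h%:R, ((h - m)%:R)^-1; split; first by rewrite ltr0n.
split; first by rewrite invr_gt0.
move=> c C c0 C0 Xi L _ HXi Hdist Phi [HPhi LPhi Hker].
have Pe := @orth_entry R _ _ Phi HPhi.
split.
  apply: norm_ub => [|i j]; first by rewrite mulr_ge0 // ltW.
  rewrite mxE; apply: le_trans (ler_norm_sum _ _ _) _.
  rewrite -[h in h%:R]card_ord -sumr_const; rewrite mulr_suml; apply: ler_sum => k _; rewrite mul1r.
  rewrite normrM -[C]mulr1; apply: ler_pM => //; first by apply: le_trans HXi; apply: norm_lb.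
move=> Q' HQ' Hdeg.
pose Q := Q' *m Phi^T.
have HQ : mx_norm_inf Q < c.
  apply: (@le_lt_trans _ _ ((h - m)%:R * mx_norm_inf Q')).
    apply: norm_ub => [|i j]; first by rewrite mulr_ge0 ?norm_ge0.
    rewrite mxE; apply: le_trans (ler_norm_sum _ _ _) _.
    have -> : (h - m)%:R * mx_norm_inf Q' = \sum_(k < h - m) mx_norm_inf Q'.
      by rewrite sumr_const card_ord mulr_natl.
    apply: ler_sum => k _.
    rewrite normrM -[mx_norm_inf Q']mulr1; apply: ler_pM => //; first by apply: norm_lb.
    by rewrite mxE; apply: Pe.
  by move: HQ'; rewrite -(ltr_pM2l nR) mulrA mulfV ?gt_eqF // mul1r.
apply: (Hdist Q HQ).
have [i [x [a [xi Hrow]]]] := @vdeg_pair R _ _ _ Hdeg.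
have EM : (Xi + Q) *m Phi = Xi *m Phi + Q'.
  by rewrite mulmxDl -mulmxA HPhi mulmx1.
exists i, x, a; split.
  apply/eqP => /rowP /(_ i); rewrite !mxE eqxx (eq_sym i x) (negbTE xi) mulr0 subr0 => /eqP.
  by rewrite oner_eq0.
apply: (@in_rowspace R _ _ _ L Phi _ Hker).
rewrite -mulmxA EM !dual_eE mulmxBl -scalemxAl -!rowE Hrow subrr.
by [].
Qed.
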